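(* For every countable ordinal $\lambda<\omega_1$ there is a continuous map $f_\lambda:[0,1]\to[0,1]$ such that the chain components poset $(\mathfrak{C}_{f_\lambda},\preceq)$ is order isomorphic to the ordinal $\lambda+1$ with its usual order $\in$.
   Context: For a map $f:[0,1]\to[0,1]$ with the usual metric: an $\varepsilon$-chain from $x$ to $y$ is a finite sequence $x_0=x,\dots,x_n=y$, $n\ge1$, with $|f(x_i)-x_{i+1}|<\varepsilon$; $x\,\mathcal{C}\,y$ iff for every $\varepsilon>0$ there is an $\varepsilon$-chain from $x$ to $y$; $CR_f=\{x:x\,\mathcal{C}\,x\}$; $x\,E\,y$ iff $x\,\mathcal{C}\,y$ and $y\,\mathcal{C}\,x$; $\mathfrak{C}_f=CR_f/E$ is the set of chain components, partially ordered by $[x]\preceq[y]$ iff $y\,\mathcal{C}\,x$. *)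

(* Defs.v *)
From Stdlib Require Import Reals.
Open Scope R_scope.

Definition I01 (x : R) : Prop := 0 <= x <= 1.

Definition maps_I01 (f : R -> R) : Prop := forall x, I01 x -> I01 (f x).

Definition eps_chain (f : R -> R) (eps x y : R) : Prop :=
  exists (n : nat) (s : nat -> R),
    (1 <= n)%nat /\ s 0%nat = x /\ s n = y /\
    (forall i, (i <= n)%nat -> I01 (s i)) /\
    (forall i, (i < n)%nat -> Rabs (f (s i) - s (S i)) < eps).

Definition chain_rel (f : R -> R) (x y : R) : Prop :=
  forall eps, 0 < eps -> eps_chain f eps x y.

Definition CR (f : R -> R) (x : R) : Prop := I01 x /\ chain_rel f x x.

Definition chainE (f : R -> R) (x y : R) : Prop :=
  chain_rel f x y /\ chain_rel f y x.

Definition is_chain_component (f : R -> R) (A : R -> Prop) : Prop :=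
  exists x, CR f x /\ A = (fun y => CR f y /\ chainE f x y).

Definition ChainComp (f : R -> R) : Type := {A : R -> Prop | is_chain_component f A}.

Definition comp_le (f : R -> R) (A B : ChainComp f) : Prop :=
  exists x y, proj1_sig A x /\ proj1_sig B y /\ chain_rel f y x.

(* countable strict well-orders (models of countable ordinals lambda) *)
Definition countable_type (T : Type) : Prop :=
  exists g : T -> nat, forall a b, g a = g b -> a = b.

Definition strict_well_order (T : Type) (lt : T -> T -> Prop) : Prop :=
  (forall a, ~ lt a a) /\
  (forall a b c, lt a b -> lt b c -> lt a c) /\
  (forall a b, lt a b \/ a = b \/ lt b a) /\
  well_founded lt.

(* lambda + 1 = lambda u {lambda}: option T with None as the new top element *)
Definition succ_lt (T : Type) (lt : T -> T -> Prop) (a b : option T) : Prop :=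
  match a, b with
  | Some a', Some b' => lt a' b'
  | Some _, None => True
  | None, _ => False
  end.

Definition succ_le (T : Type) (lt : T -> T -> Prop) (a b : option T) : Prop :=
  a = b \/ succ_lt T lt a b.

Definition order_iso (A B : Type) (leA : A -> A -> Prop) (leB : B -> B -> Prop)
  (h : A -> B) : Prop :=
  (forall a1 a2, h a1 = h a2 -> a1 = a2) /\
  (forall b, exists a, h a = b) /\
  (forall a1 a2, leA a1 a2 <-> leB (h a1) (h a2)).

(* Main.v *)
Require Import Defs.
From Stdlib Require Import Reals Lra Lia Classical ClassicalDescription IndefiniteDescription ProofIrrelevance FunctionalExtensionality PropExtensionality.
Open Scope R_scope.

Definition term {T:Type} (g : T -> nat) (P : T -> Prop) (n : nat) : R :=
  if excluded_middle_informative (exists s, g s = n /\ P s) then (/2)^(S n) else 0.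

Fixpoint ps {T:Type} (g : T -> nat) (P : T -> Prop) (N:nat) : R :=
  match N with O => 0 | S N' => ps g P N' + term g P N' end.

Lemma half_pow_pos n : 0 < (/2)^n.
Proof. apply pow_lt; lra. Qed.

Lemma term_bounds {T} g P n : 0 <= @term T g P n <= (/2)^(S n).
Proof. unfold term; destruct excluded_middle_informative; pose proof (half_pow_pos (S n)); lra. Qed.

Lemma ps_incr {T} g P N k : @ps T g P N <= ps g P (N + k).
Proof. induction k; rewrite ?Nat.add_0_r, ?Nat.add_succ_r; simpl; try lra.
  pose proof (term_bounds g P (N+k)); lra. Qed.

Lemma ps_tail {T} g P N k : @ps T g P (N + k) <= ps g P N + (/2)^N - (/2)^(N+k).
Proof. induction k; rewrite ?Nat.add_0_r, ?Nat.add_succ_r; simpl; try lra.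
  pose proof (term_bounds g P (N+k)). simpl in H. lra. Qed.

Lemma ps_le_all {T} g P M N : @ps T g P M <= ps g P N + (/2)^N.
Proof. destruct (Nat.le_ge_cases M N) as [h|h].
 - replace N with (M + (N - M))%nat by lia. pose proof (ps_incr g P M (N-M)).
   pose proof (half_pow_pos (M + (N-M))). lra.
 - replace M with (N + (M - N))%nat by lia. pose proof (ps_tail g P N (M-N)).
   pose proof (half_pow_pos (N + (M-N))). lra. Qed.

Lemma ps_mono {T} g (P Q : T -> Prop) N :
  (forall s, (g s < N)%nat -> P s -> Q s) -> ps g P N <= ps g Q N.
Proof. induction N; intros H; simpl; try lra.
  assert (ps g P N <= ps g Q N) by (apply IHN; intros; apply H; auto; lia).
  unfold term. destruct excluded_middle_informative as [e|e]; destruct excluded_middle_informative as [e'|e'];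
   try lra. 2: pose proof (half_pow_pos (S N)); lra.
  exfalso; apply e'. destruct e as [s [h1 h2]]. exists s; split; auto. apply H; auto; lia. Qed.

Lemma ps_gap {T} (g : T -> nat) (P Q : T -> Prop) t N :
  (forall a b, g a = g b -> a = b) ->
  (forall s, P s -> Q s) -> Q t -> ~ P t -> (g t < N)%nat ->
  ps g P N + (/2)^(S (g t)) <= ps g Q N.
Proof. intros gi PQ Qt nPt. induction N; intros h; [lia|]. simpl.
  destruct (Nat.eq_dec (g t) N) as [e|e].
  - pose proof (ps_mono g P Q N (fun s _ => PQ s)). subst N.
    unfold term. destruct (excluded_middle_informative (exists s, g s = g t /\ P s)) as [[s [h1 h2]]|e1].
    + apply gi in h1; subst; contradiction.
    + destruct (excluded_middle_informative (exists s, g s = g t /\ Q s)) as [e2|e2]; [simpl; lra|]. exfalso; apply e2; eauto.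
  - assert (ps g P N + (/2)^(S (g t)) <= ps g Q N) by (apply IHN; lia).
    unfold term. destruct excluded_middle_informative as [e1|e1]; destruct excluded_middle_informative as [e2|e2];
    try (simpl in *; lra).
    + exfalso; apply e2. destruct e1 as [s [? ?]]; eauto.
    + pose proof (half_pow_pos (S N)); simpl in *; lra. Qed.

Definition Sset {T} g P := fun v => exists N, v = @ps T g P N.
Lemma Sset_bound {T} g P : bound (@Sset T g P).
Proof. exists 1. intros v [N ->]. pose proof (ps_le_all g P N 0). simpl in H. lra. Qed.
Lemma Sset_ne {T} g P : exists x, @Sset T g P x.
Proof. exists 0, 0%nat. reflexivity. Qed.
Definition Ssum {T} g P : R := proj1_sig (completeness (@Sset T g P) (Sset_bound g P) (Sset_ne g P)).

Lemma Ssum_ge {T} g P N : @ps T g P N <= Ssum g P.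
Proof. unfold Ssum. destruct completeness as [m [h1 h2]]. simpl. apply h1. exists N; auto. Qed.
Lemma Ssum_le {T} g P v : (forall N, @ps T g P N <= v) -> Ssum g P <= v.
Proof. intros H. unfold Ssum. destruct completeness as [m [h1 h2]]. simpl. apply h2.
  intros x [N ->]. auto. Qed.
Lemma Ssum_tail {T} g P N : @Ssum T g P <= ps g P N + (/2)^N.
Proof. apply Ssum_le. intros; apply ps_le_all. Qed.
Lemma Ssum_range {T} g P : 0 <= @Ssum T g P <= 1.
Proof. split. apply (Ssum_ge g P 0). pose proof (Ssum_tail g P 0). simpl in H. lra. Qed.
Lemma Ssum_mono {T} g (P Q : T -> Prop) : (forall s, P s -> Q s) -> Ssum g P <= Ssum g Q.
Proof. intros H. apply Ssum_le. intros N. eapply Rle_trans. apply (ps_mono g P Q N); auto. apply Ssum_ge. Qed.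
Lemma Ssum_gap {T} (g : T -> nat) (P Q : T -> Prop) t :
  (forall a b, g a = g b -> a = b) ->
  (forall s, P s -> Q s) -> Q t -> ~ P t ->
  Ssum g P + (/2)^(S (g t)) <= Ssum g Q.
Proof. intros gi PQ Qt nPt.
  assert (Ssum g P <= Ssum g Q - (/2)^(S (g t))); [|lra].
  apply Ssum_le. intros N. pose proof (ps_incr g P N (S (g t))).
  pose proof (ps_gap g P Q t (N + S (g t)) gi PQ Qt nPt ltac:(lia)).
  pose proof (Ssum_ge g Q (N + S (g t))). lra. Qed.
Lemma Ssum_empty {T} g (P : T -> Prop) : (forall s, ~ P s) -> Ssum g P = 0.
Proof. intros H. apply Rle_antisym. apply Ssum_le. intros N. induction N; simpl. lra.
  unfold term. destruct excluded_middle_informative as [[s [_ h]]|]. destruct (H s h). lra.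
  apply (Ssum_range g P). Qed.

Lemma so_irr {T} lt (W : strict_well_order T lt) a : ~ succ_lt T lt a a.
Proof. destruct W as [i _]. destruct a; simpl; auto. Qed.

Lemma so_trans {T} lt (W : strict_well_order T lt) a b c :
  succ_lt T lt a b -> succ_lt T lt b c -> succ_lt T lt a c.
Proof. destruct W as [_ [tr _]]. destruct a, b, c; simpl; intros; eauto; contradiction. Qed.

Lemma so_tri {T} lt (W : strict_well_order T lt) a b :
  succ_lt T lt a b \/ a = b \/ succ_lt T lt b a.
Proof. destruct W as [_ [_ [tri _]]]. destruct a as [a|], b as [b|]; simpl; auto.
  destruct (tri a b) as [h|[h|h]]; subst; auto. Qed.

Lemma so_wf {T} lt (W : strict_well_order T lt) : well_founded (succ_lt T lt).
Proof. destruct W as [_ [_ [_ wf]]].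
  assert (HS : forall t, Acc (succ_lt T lt) (Some t)).
  { intros t. induction (wf t) as [t _ IH]. constructor. intros [y|] h; simpl in h; [|contradiction].
    apply IH; auto. }
  intros [t|]; auto. constructor. intros [y|] h; simpl in h; [auto|contradiction]. Qed.

Lemma so_min {T} lt (W : strict_well_order T lt) (P : option T -> Prop) :
  (exists a, P a) -> exists m, P m /\ forall x, succ_lt T lt x m -> ~ P x.
Proof. intros [a Pa]. revert Pa. induction (so_wf lt W a) as [a _ IH]. intros Pa.
  destruct (classic (exists x, succ_lt T lt x a /\ P x)) as [[x [h1 h2]]|h].
  - eapply IH; eauto.
  - exists a; split; auto. intros x h1 h2; apply h; eauto. Qed.

Definition psi {T} lt (g : T -> nat) (a : option T) : R :=
  Ssum g (fun s => succ_lt T lt (Some s) a).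

Definition wt {T} (g : T -> nat) (t : T) : R := (/2)^(S (g t)).

Lemma wt_pos {T} g t : 0 < @wt T g t.
Proof. apply half_pow_pos. Qed.

Lemma psi_range {T} lt g a : 0 <= @psi T lt g a <= 1.
Proof. apply Ssum_range. Qed.

Lemma psi_mono {T} lt g (W : strict_well_order T lt) a b :
  succ_le T lt a b -> @psi T lt g a <= psi lt g b.
Proof. intros [->|h]. lra. apply Ssum_mono. intros s hs. eapply so_trans; eauto. Qed.

Lemma psi_gap {T} lt g (W : strict_well_order T lt) t b :
  (forall a b, g a = g b -> a = b) ->
  succ_lt T lt (Some t) b -> @psi T lt g (Some t) + wt g t <= psi lt g b.
Proof. intros gi h. apply Ssum_gap; auto.
  - intros s hs. eapply so_trans; eauto.
  - apply (so_irr lt W (Some t)). Qed.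

Lemma psi_lt {T} lt g (W : strict_well_order T lt) a b :
  (forall a b, g a = g b -> a = b) ->
  succ_lt T lt a b -> @psi T lt g a < psi lt g b.
Proof. intros gi h. destruct a as [t|]; [|contradiction].
  pose proof (psi_gap lt g W t b gi h). pose proof (wt_pos g t). lra. Qed.

Lemma psi_le_iff {T} lt g (W : strict_well_order T lt) a b :
  (forall a b, g a = g b -> a = b) ->
  (@psi T lt g a <= psi lt g b <-> succ_le T lt a b).
Proof. intros gi. split.
  - intros h. destruct (so_tri lt W a b) as [h1|[h1|h1]]; unfold succ_le; auto.
    pose proof (psi_lt lt g W b a gi h1). lra.
  - apply psi_mono; auto. Qed.

Lemma psi_inj {T} lt g (W : strict_well_order T lt) a b :
  (forall a b, g a = g b -> a = b) -> @psi T lt g a = psi lt g b -> a = b.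
Proof. intros gi h. destruct (so_tri lt W a b) as [h1|[h1|h1]]; auto.
  pose proof (psi_lt lt g W a b gi h1); lra. pose proof (psi_lt lt g W b a gi h1); lra. Qed.

Lemma psi_zero {T} lt g (W : strict_well_order T lt) : exists a, @psi T lt g a = 0.
Proof. destruct (so_min lt W (fun _ => True)) as [m [_ hm]]. exists None; auto.
  exists m. apply Ssum_empty. intros s hs. exact (hm _ hs I). Qed.

Lemma psi_None_max {T} lt g (W : strict_well_order T lt) a : @psi T lt g a <= psi lt g None.
Proof. apply psi_mono; auto. destruct a; [right; simpl; auto|left; auto]. Qed.

Lemma psi_closed {T} lt g (W : strict_well_order T lt) c :
  (forall a b, g a = g b -> a = b) ->
  (forall a, @psi T lt g a <> c) -> exists r, 0 < r /\ forall a, r <= Rabs (c - psi lt g a).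
Proof. intros gi hc.
  destruct (classic (exists a, psi lt g a > c)) as [hex|hno].
  2:{ exists (c - psi lt g None). assert (psi lt g None < c).
      { destruct (Rtotal_order (psi lt g None) c) as [h|[h|h]]; auto. destruct (hc _ h). exfalso; eauto. }
      split. lra. intros a. pose proof (psi_None_max lt g W a). unfold Rabs; destruct Rcase_abs; lra. }
  destruct (so_min lt W _ hex) as [b [hb hmin]].
  assert (below : forall a, succ_lt T lt a b -> psi lt g a < c).
  { intros a h. specialize (hmin a h). destruct (Rtotal_order (psi lt g a) c) as [h1|[h1|h1]]; auto.
    destruct (hc _ h1). contradiction. }
  assert (above : forall a, ~ succ_lt T lt a b -> psi lt g b <= psi lt g a).
  { intros a h. apply psi_mono; auto. destruct (so_tri lt W a b) as [h1|[h1|h1]]. contradiction.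
    left; auto. right; auto. }
  destruct (classic (exists a, succ_lt T lt a b)) as [[a0 ha0]|hnone].
  2:{ exists (psi lt g b - c). split. lra. intros a. assert (~ succ_lt T lt a b) by eauto.
      pose proof (above a H). unfold Rabs; destruct Rcase_abs; lra. }
  destruct (classic (exists p, succ_lt T lt p b /\ forall a, succ_lt T lt a b -> ~ succ_lt T lt p a))
    as [[p [hp1 hp2]]|hlim].
  - exists (Rmin (c - psi lt g p) (psi lt g b - c)). pose proof (below p hp1).
    split. apply Rmin_glb_lt; lra. intros a.
    destruct (classic (succ_lt T lt a b)) as [h|h].
    + assert (psi lt g a <= psi lt g p).
      { apply psi_mono; auto. destruct (so_tri lt W a p) as [h1|[h1|h1]]. right; auto. left; auto.
        destruct (hp2 a h h1). }
      pose proof (Rmin_l (c - psi lt g p) (psi lt g b - c)). unfold Rabs; destruct Rcase_abs; lra.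
    + pose proof (above a h). pose proof (Rmin_r (c - psi lt g p) (psi lt g b - c)).
      unfold Rabs; destruct Rcase_abs; lra.
  - exfalso.
    assert (lim : forall p, succ_lt T lt p b -> exists a, succ_lt T lt p a /\ succ_lt T lt a b).
    { intros p hp. apply NNPP. intros hn. apply hlim. exists p. split; auto.
      intros a ha hpa. apply hn. eauto. }
    assert (claim : forall N, exists a, succ_lt T lt a b /\
               forall s, (g s < N)%nat -> succ_lt T lt (Some s) b -> succ_lt T lt (Some s) a).
    { induction N.
      - exists a0. split; auto. intros; lia.
      - destruct IHN as [a [ha1 ha2]].
        destruct (classic (exists s, g s = N /\ succ_lt T lt (Some s) b)) as [[s [hs1 hs2]]|hns].
        + assert (exists m, succ_lt T lt m b /\ succ_le T lt a m /\ succ_le T lt (Some s) m) as [m [hm1 [hm2 hm3]]].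
          { destruct (so_tri lt W a (Some s)) as [h1|[h1|h1]].
            - exists (Some s). repeat split; auto; [right; auto|left; auto].
            - exists a. subst. repeat split; auto; left; auto.
            - exists a. repeat split; auto; [left; auto|right; auto]. }
          destruct (lim m hm1) as [a' [h1 h2]]. exists a'. split; auto.
          intros s' hs' hb'. destruct (Nat.eq_dec (g s') N) as [e|e].
          * assert (s' = s) by (apply gi; congruence). subst s'.
            destruct hm3 as [<-|hm3]; eauto using so_trans.
          * assert (succ_lt T lt (Some s') a) by (apply ha2; auto; lia).
            destruct hm2 as [<-|hm2]; eauto using so_trans.
        + exists a. split; auto. intros s' hs' hb'. destruct (Nat.eq_dec (g s') N) as [e|e].
          * exfalso; apply hns; eauto.
          * apply ha2; auto; lia. }
    destruct (pow_lt_1_zero (/2) ltac:(rewrite Rabs_pos_eq; lra) (psi lt g b - c) ltac:(lra)) as [N hN].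
    specialize (hN N (le_n N)). rewrite Rabs_pos_eq in hN by (apply pow_le; lra).
    destruct (claim N) as [a [ha1 ha2]].
    pose proof (below a ha1).
    pose proof (Ssum_tail g (fun s => succ_lt T lt (Some s) b) N).
    pose proof (ps_mono g (fun s => succ_lt T lt (Some s) b) (fun s => succ_lt T lt (Some s) a) N ha2).
    pose proof (Ssum_ge g (fun s => succ_lt T lt (Some s) a) N).
    unfold psi in *. lra.
Qed.

Definition Dset {T} lt g z := fun v => exists a, v = - Rabs (z - @psi T lt g a).
Lemma Dset_bound {T} lt g z : bound (@Dset T lt g z).
Proof. exists 0. intros v [a ->]. pose proof (Rabs_pos (z - psi lt g a)). lra. Qed.
Lemma Dset_ne {T} lt g z : exists v, @Dset T lt g z v.
Proof. exists (- Rabs (z - psi lt g None)), None. reflexivity. Qed.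
Definition dd {T} lt g z : R := - proj1_sig (completeness (@Dset T lt g z) (Dset_bound lt g z) (Dset_ne lt g z)).

Lemma dd_le {T} lt g z a : @dd T lt g z <= Rabs (z - psi lt g a).
Proof. unfold dd. destruct completeness as [m [h1 h2]]. simpl.
  assert (- Rabs (z - psi lt g a) <= m) by (apply h1; exists a; auto). lra. Qed.
Lemma dd_ge {T} lt g z r : (forall a, r <= Rabs (z - psi lt g a)) -> r <= @dd T lt g z.
Proof. intros H. unfold dd. destruct completeness as [m [h1 h2]]. simpl.
  assert (m <= - r); [|lra]. apply h2. intros v [a ->]. specialize (H a). lra. Qed.
Lemma dd_nonneg {T} lt g z : 0 <= @dd T lt g z.
Proof. apply dd_ge. intros; apply Rabs_pos. Qed.
Lemma dd_lip1 {T} lt g z z' : @dd T lt g z - Rabs (z - z') <= dd lt g z'.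
Proof. apply dd_ge. intros a. pose proof (dd_le lt g z a).
  pose proof (Rabs_triang (z - z') (z' - psi lt g a)). replace (z - z' + (z' - psi lt g a)) with (z - psi lt g a) in H0 by ring.
  lra. Qed.
Lemma dd_lip {T} lt g z z' : Rabs (@dd T lt g z - dd lt g z') <= Rabs (z - z').
Proof. pose proof (dd_lip1 lt g z z'). pose proof (dd_lip1 lt g z' z). rewrite Rabs_minus_sym in H0.
  unfold Rabs at 1; destruct Rcase_abs; lra. Qed.

Definition ff {T} lt g (z : R) : R := z - @dd T lt g z.

Lemma ff_cont {T} lt g : continuity (@ff T lt g).
Proof. intros x eps heps. exists (eps/2). split. lra. intros y [_ hy]. simpl in *. unfold R_dist in *.
  unfold ff. pose proof (dd_lip lt g y x).
  replace (y - dd lt g y - (x - dd lt g x)) with ((y - x) - (dd lt g y - dd lt g x)) by ring.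
  pose proof (Rabs_triang (y - x) (- (dd lt g y - dd lt g x))). rewrite Rabs_Ropp in H0.
  replace (y - x + - (dd lt g y - dd lt g x)) with (y - x - (dd lt g y - dd lt g x)) in H0 by ring. lra. Qed.

Lemma ff_psi {T} lt g a : @ff T lt g (psi lt g a) = psi lt g a.
Proof. unfold ff. pose proof (dd_le lt g (psi lt g a) a). pose proof (dd_nonneg lt g (psi lt g a)).
  rewrite Rminus_diag, Rabs_R0 in H. lra. Qed.

Lemma ff_above {T} lt g b z : psi lt g b <= z -> psi lt g b <= @ff T lt g z <= z.
Proof. intros h. unfold ff. pose proof (dd_le lt g z b). pose proof (dd_nonneg lt g z).
  rewrite Rabs_pos_eq in H by lra. lra. Qed.

Lemma block {T} lt g c : 0 < @dd T lt g c -> exists e0, 0 < e0 /\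
  forall eps x y, 0 < eps <= e0 -> x <= c -> c <= y -> ~ eps_chain (ff lt g) eps x y.
Proof. intros hc. exists (dd lt g c / 2). split. lra. intros eps x y he hx hy [n [s [hn [h0 [hN [_ hstep]]]]]].
  assert (step : forall z w, z <= c -> Rabs (ff lt g z - w) < eps -> w < c).
  { intros z w hz hw. unfold ff in hw. pose proof (dd_lip1 lt g c z). pose proof (dd_nonneg lt g z).
    rewrite Rabs_minus_sym in H. unfold Rabs in *; destruct Rcase_abs; destruct Rcase_abs; lra. }
  assert (all : forall i, (i <= n)%nat -> s i <= c).
  { induction i; intros hi. lra. left. apply (step (s i)). apply IHi; lia. apply hstep; lia. }
  destruct n; [lia|]. assert (s (S n) < c) by (apply (step (s n)); [apply all; lia | apply hstep; lia]).
  lra. Qed.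

Fixpoint dseq (F : R -> R) (y x h : R) (i : nat) : R :=
  match i with O => x | S i => Rmax y (F (dseq F y x h i) - h) end.

Lemma descent {T} lt g b x eps : psi lt g b <= x <= 1 -> 0 < eps ->
  eps_chain (@ff T lt g) eps x (psi lt g b).
Proof. intros hx he. set (y := psi lt g b) in *. set (h := eps/2).
  assert (hy : 0 <= y) by apply psi_range.
  assert (inv : forall i, y <= dseq (ff lt g) y x h i <= x /\
     dseq (ff lt g) y x h i <= Rmax y (x - INR i * h)).
  { induction i; simpl dseq.
    - simpl. rewrite Rmult_0_l, Rminus_0_r. split. lra. apply Rmax_r.
    - destruct IHi as [[h1 h2] h3]. pose proof (ff_above lt g b _ h1). fold y in H.
      rewrite S_INR. unfold Rmax in *. unfold h in *.
      repeat destruct Rle_dec; lra. }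
  destruct (INR_archimed h (x - y)) as [n hn]. unfold h; lra.
  exists (S n), (dseq (ff lt g) y x h). split. lia. split. reflexivity. split.
  - destruct (inv (S n)) as [[h1 _] h2]. rewrite S_INR in h2.
    assert (0 < h) by (unfold h; lra). assert (x - (INR n + 1) * h <= y) by (rewrite Rmult_plus_distr_r, Rmult_1_l; lra). rewrite Rmax_left in h2 by lra. lra.
  - split.
    + intros i _. destruct (inv i) as [[h1 h2] _]. unfold I01. lra.
    + intros i _. simpl dseq. destruct (inv i) as [[h1 _] _]. pose proof (ff_above lt g b _ h1). fold y in H.
      unfold Rmax, h in *. destruct Rle_dec; unfold Rabs; destruct Rcase_abs; lra.
Qed.

Lemma notK_pos {T} lt g (W : strict_well_order T lt) c :
  (forall a b, g a = g b -> a = b) -> (forall a, psi lt g a <> c) -> 0 < @dd T lt g c.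
Proof. intros gi hc. destruct (psi_closed lt g W c gi hc) as [r [hr H]].
  pose proof (dd_ge lt g c r H). lra. Qed.

Lemma not_chain {T} lt g (W : strict_well_order T lt) c x y :
  (forall a b, g a = g b -> a = b) -> (forall a, psi lt g a <> c) -> x <= c <= y ->
  ~ chain_rel (@ff T lt g) x y.
Proof. intros gi hc hxy H. destruct (block lt g c (notK_pos lt g W c gi hc)) as [e0 [he0 hb]].
  apply (hb e0 x y); try lra. apply H; lra. Qed.

Lemma CR_iff {T} lt g (W : strict_well_order T lt) x :
  (forall a b, g a = g b -> a = b) ->
  (CR (@ff T lt g) x <-> I01 x /\ exists a, x = psi lt g a).
Proof. intros gi. split.
  - intros [hI hC]. split; auto. apply NNPP. intros hn.
    apply (not_chain lt g W x x x gi); auto. intros a e; apply hn; eauto. lra.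
  - intros [hI [a ->]]. split; auto. intros eps he. exists 1%nat, (fun _ => psi lt g a).
    split; [lia|]. split; [reflexivity|]. split; [reflexivity|]. split.
    + intros; auto.
    + intros i hi. rewrite ff_psi, Rminus_diag, Rabs_R0. lra. Qed.

Lemma chain_iff {T} lt g (W : strict_well_order T lt) a b :
  (forall a b, g a = g b -> a = b) ->
  (chain_rel (@ff T lt g) (psi lt g a) (psi lt g b) <-> psi lt g b <= psi lt g a).
Proof. intros gi. split.
  - intros H. apply Rnot_lt_le. intros hlt.
    destruct (so_tri lt W a b) as [h|[h|h]].
    + destruct a as [t|]; [|contradiction].
      apply (not_chain lt g W (psi lt g (Some t) + wt g t / 2) (psi lt g (Some t)) (psi lt g b) gi); auto.
      * intros e he. pose proof (wt_pos g t). destruct (so_tri lt W e (Some t)) as [h1|[h1|h1]].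
        -- pose proof (psi_lt lt g W _ _ gi h1). lra.
        -- subst. lra.
        -- pose proof (psi_gap lt g W t e gi h1). lra.
      * pose proof (wt_pos g t). pose proof (psi_gap lt g W t b gi h). lra.
    + subst; lra.
    + pose proof (psi_lt lt g W _ _ gi h). lra.
  - intros h eps he. apply descent; auto. split; auto. apply psi_range. Qed.

Lemma comp_char {T} lt g (W : strict_well_order T lt) (A : R -> Prop) :
  (forall a b, g a = g b -> a = b) ->
  is_chain_component (@ff T lt g) A -> exists a, forall y, A y <-> y = psi lt g a.
Proof. intros gi [x [hx ->]]. apply (CR_iff lt g W x gi) in hx as hx'. destruct hx' as [_ [a ->]].
  exists a. intros y. split.
  - intros [hy [h1 h2]]. apply (CR_iff lt g W y gi) in hy as [_ [b ->]].
    apply (chain_iff lt g W a b gi) in h1. apply (chain_iff lt g W b a gi) in h2. lra.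
  - intros ->. split; auto. split; apply (chain_iff lt g W a a gi); lra. Qed.

Theorem theorem2p3 :
  forall (T : Type) (lt : T -> T -> Prop),
    countable_type T -> strict_well_order T lt ->
    exists f : R -> R,
      continuity f /\ maps_I01 f /\
      exists h : ChainComp f -> option T,
        order_iso (ChainComp f) (option T) (comp_le f) (succ_le T lt) h.
Proof.
  intros T lt [g gi] W. exists (ff lt g). split; [apply ff_cont|]. split.
  { intros z [hz0 hz1]. destruct (psi_zero lt g W) as [a0 ha0].
    pose proof (dd_le lt g z a0). pose proof (dd_nonneg lt g z). rewrite ha0, Rminus_0_r, Rabs_pos_eq in H by lra.
    unfold ff, I01. lra. }
  assert (hex : forall A : ChainComp (ff lt g), exists a, proj1_sig A (psi lt g a)).
  { intros [A hA]. destruct (comp_char lt g W A gi hA) as [a ha]. exists a. simpl. apply ha; auto. }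
  set (h := fun A => proj1_sig (constructive_indefinite_description _ (hex A))).
  assert (hA : forall A y, proj1_sig A y <-> y = psi lt g (h A)).
  { intros A y. unfold h. destruct constructive_indefinite_description as [a ha]. simpl.
    destruct A as [A pA]. simpl in *. destruct (comp_char lt g W A gi pA) as [a' ha'].
    apply ha' in ha. rewrite ha'. rewrite ha. tauto. }
  clearbody h. exists h. split; [|split].
  - intros A1 A2 e. assert (E : forall y, proj1_sig A1 y <-> proj1_sig A2 y).
    { intros y. rewrite (hA A1 y), (hA A2 y), e. tauto. }
    destruct A1 as [A1 p1], A2 as [A2 p2]. simpl in E. apply subset_eq_compat.
    apply functional_extensionality. intros y. apply propositional_extensionality. auto.
  - intros b.
    assert (pb : is_chain_component (ff lt g) (fun y => CR (ff lt g) y /\ chainE (ff lt g) (psi lt g b) y)).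
    { exists (psi lt g b). split; auto. apply (CR_iff lt g W _ gi). split. apply psi_range. eauto. }
    exists (exist _ _ pb). apply (psi_inj lt g W _ _ gi). symmetry. apply (hA (exist _ _ pb)). simpl.
    split. apply (CR_iff lt g W _ gi). split. apply psi_range. eauto.
    split; apply (chain_iff lt g W b b gi); lra.
  - intros A1 A2. rewrite <- (psi_le_iff lt g W _ _ gi). split.
    + intros [x [y [h1 [h2 h3]]]]. apply hA in h1. apply hA in h2. subst.
      apply (chain_iff lt g W _ _ gi) in h3. auto.
    + intros H. exists (psi lt g (h A1)), (psi lt g (h A2)). split. apply hA; auto. split. apply hA; auto.
      apply (chain_iff lt g W _ _ gi); auto.
Qed.
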